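(* Let $r$ be a positive integer and suppose $\vartheta> 1/(1+r)$, $\vartheta<1$. Let $(Z_t)$ be the random walk of the context with $c=1$. Then $$\pi(u,1,r,\vartheta)=\varrho(\vartheta)^u\quad\text{for all } u\in\mathbb{N}_0,$$ where $\varrho(\vartheta)=\pi(1,1,r,\vartheta)$ is the unique solution in $[0,1)$ of $\varrho=(1-\vartheta)+\vartheta\varrho^{r+1}$. Moreover, for the single-agent trust model with prior parameters $\alpha,\beta\in\mathbb{N}$ and $c=1$, the quitting probability satisfies $p_{\rm quit}(\alpha,\beta,1,r,\vartheta)=\pi(u_{\rm crit},1,r,\vartheta)$ with $u_{\rm crit}=r\alpha-\beta+1$.
   Context: Random walk: for $\vartheta\in(0,1)$ and positive integers $c,r$, let $Z_0=0$ and $Z_t=Z_{t-1}+\Delta_t$ with $\Delta_t$ i.i.d., $\Delta_t=+c$ with probability $1-\vartheta$ and $\Delta_t=-r$ with probability $\vartheta$. Define $\pi(u,c,r,\vartheta):=\mathbb{P}(\exists t\ge 0: Z_t\ge u)$. Single-agent trust model: $(X_t)$ i.i.d. Bernoulli$(\vartheta)$; $\hat S_t=\sum_{s\le t}X_s\mathbf{1}_{\{A_s=1\}}$, $\hat F_t=\sum_{s\le t}(1-X_s)\mathbf{1}_{\{A_s=1\}}$, $\hat\vartheta_t=\frac{\alpha+\hat S_t}{\alpha+\beta+\hat S_t+\hat F_t}$; $A_t=1$ iff $r\hat\vartheta_n-c(1-\hat\vartheta_n)\ge0$ for all $n\le t-1$; $\tau:=\inf\{t\in\mathbb{N}\cup\{\infty\}: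 r\hat\vartheta_t-c(1-\hat\vartheta_t)<0\}$; $p_{\rm quit}(\alpha,\beta,c,r,\vartheta):=\mathbb{P}(\tau<\infty)$. (The agent places trust while $c\hat F_t-r\hat S_t\le r\alpha-c\beta$.) *)

(* Defs.v *)
From HB Require Import structures.
From mathcomp Require Import all_boot all_order all_algebra.
From mathcomp Require Import all_classical all_reals all_analysis.
Set Implicit Arguments. Unset Strict Implicit. Unset Printing Implicit Defensive.
Import Order.TTheory GRing.Theory Num.Theory.
Local Open Scope classical_set_scope.
Local Open Scope ring_scope.

Definition iid_seq {d : measure_display} {T : measurableType d} {R : realType}
  (P : probability T R) {V : eqType} (Y : nat -> T -> V) : Prop :=
  [/\ (forall i v, measurable [set w | Y i w = v]),
      (forall i v, P [set w | Y i w = v] = P [set w | Y 0%N w = v]) &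
      (forall (I : seq nat) (v : nat -> V), uniq I ->
         P [set w | forall i, i \in I -> Y i w = v i]
         = (\prod_(i <- I) P [set w | Y i w = v i])%E)].

(* Increments Delta_t (t = 1,2,... is stored at index t-1): i.i.d., equal to
   +c with probability 1 - theta and to -r with probability theta. *)
Definition walk_law {d : measure_display} {T : measurableType d} {R : realType}
  (P : probability T R) (Delta : nat -> T -> int) (c r : nat) (theta : R) : Prop :=
  [/\ iid_seq P Delta,
      P [set w | Delta 0%N w = c%:Z] = (1 - theta)%:E &
      P [set w | Delta 0%N w = - r%:Z] = theta%:E].

Definition walkZ {T : Type} (Delta : nat -> T -> int) (t : nat) (w : T) : int :=
  \sum_(s < t) Delta s w.

(* The event {exists t >= 0, Z_t >= u}; pi(u,c,r,theta) is its probability. *)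
Definition walk_reach {T : Type} (Delta : nat -> T -> int) (u : int) : set T :=
  [set w | exists t : nat, u <= walkZ Delta t w].

(* Trust model: X_t (t >= 1, index 0 unused) i.i.d. Bernoulli(theta)
   (X_t = true means X_t = 1). *)
Definition bernoulli_law {d : measure_display} {T : measurableType d} {R : realType}
  (P : probability T R) (X : nat -> T -> bool) (theta : R) : Prop :=
  iid_seq P X /\ P [set w | X 0%N w = true] = theta%:E.

Section Trust.
Context {R : realType} (alpha beta c r : nat) {T : Type} (X : nat -> T -> bool).

Definition theta_hat_of (s f : nat) : R :=
  (alpha%:R + s%:R) / (alpha%:R + beta%:R + s%:R + f%:R).

Definition trust_ok (s f : nat) : bool :=
  0 <= r%:R * theta_hat_of s f - c%:R * (1 - theta_hat_of s f).

(* trust_state t w = (S_t, F_t, b_t) where S_t = \hat S_t, F_t = \hat F_t and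
   b_t = [forall n <= t, trust condition at time n], i.e. b_t = (A_{t+1} == 1).
   At time t+1 the observation X_{t+1} is counted iff A_{t+1} = 1. *)
Fixpoint trust_state (t : nat) (w : T) : nat * nat * bool :=
  match t with
  | 0 => (0%N, 0%N, trust_ok 0 0)
  | t'.+1 =>
      let: (s0, f0, ok) := trust_state t' w in
      let: (s1, f1) :=
        if ok then (s0 + X t w, f0 + ~~ X t w)%N else (s0, f0) in
      (s1, f1, ok && trust_ok s1 f1)
  end.

Definition S_hat (t : nat) (w : T) : nat := (trust_state t w).1.1.
Definition F_hat (t : nat) (w : T) : nat := (trust_state t w).1.2.
Definition theta_hat (t : nat) (w : T) : R := theta_hat_of (S_hat t w) (F_hat t w).

Definition quit_event : set T :=
  [set w | exists t : nat,
     r%:R * theta_hat t w - c%:R * (1 - theta_hat t w) < 0].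
End Trust.

(* Main.v *)
Require Import Defs.
From HB Require Import structures.
From mathcomp Require Import all_boot all_order all_algebra.
From mathcomp Require Import all_classical all_reals all_analysis.
From mathcomp Require Import ring lra zify.
Import Order.TTheory GRing.Theory Num.Theory.
Import numFieldNormedType.Exports.
Local Open Scope classical_set_scope.
Local Open Scope ring_scope.
Definition hf {R : realType} (th : R) (r : nat) (x : R) : R :=
  1 - th * \sum_(k < r.+1) x ^+ k.

Lemma g_hf {R : realType} (th : R) r x :
  (1 - th) + th * x ^+ r.+1 - x = (1 - x) * hf th r x.
Proof.
rewrite /hf; set S := \sum_(k < r.+1) x ^+ k.
have H : (1 - x) * S = 1 - x ^+ r.+1.
  have := subrX1 x r.+1; rewrite -/S => H.
  by rewrite -[1 - x ^+ r.+1]opprB H -mulNr opprB.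
rewrite mulrBr mulr1 mulrCA H; ring.
Qed.

Lemma sum_lt {R : realType} (r : nat) (x y : R) : (0 < r)%N -> 0 <= x -> x < y ->
  \sum_(k < r.+1) x ^+ k < \sum_(k < r.+1) y ^+ k.
Proof.
move=> r0 x0 xy; rewrite big_ord_recl [X in _ < X]big_ord_recl !expr0 ltrD2l.
apply: ltr_sum; first by apply/hasP; exists (Ordinal r0); rewrite ?mem_index_enum.
by move=> i _; rewrite ltrXn2r.
Qed.

Lemma hf_decr {R : realType} {th : R} {r} {x y : R} : 0 < th -> (0 < r)%N -> 0 <= x -> x < y ->
  hf th r y < hf th r x.
Proof.
by move=> th0 r0 x0 xy; rewrite /hf ltrD2l ltrN2 ltr_pM2l // sum_lt.
Qed.

Lemma hf_root {R : realType} {th : R} {r} {x : R} : x < 1 ->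
  x = (1 - th) + th * x ^+ r.+1 -> hf th r x = 0.
Proof.
move=> x1 e; have : (1 - x) * hf th r x = 0 by rewrite -g_hf -e subrr.
by move/eqP; rewrite mulf_eq0 subr_eq0 (gt_eqF x1) /= => /eqP.
Qed.

Lemma hf_cont {R : realType} (th : R) r : continuous (hf th r).
Proof.
have -> : hf th r = horner (1%:P - th *: \sum_(k < r.+1) 'X^k).
  apply/funext => x; rewrite /hf !hornerE horner_sum; congr (_ - _ * _).
  by apply: eq_bigr => i _; rewrite hornerXn.
exact: continuous_horner.
Qed.

Lemma part1 {R : realType} (r : nat) (theta : R) :
  (0 < r)%N -> 1 / (1 + r%:R) < theta -> theta < 1 ->
  (exists rho : R, [/\ 0 <= rho, rho < 1,
      rho = (1 - theta) + theta * rho ^+ r.+1 &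
      forall rho' : R, 0 <= rho' -> rho' < 1 ->
        rho' = (1 - theta) + theta * rho' ^+ r.+1 -> rho' = rho]).
Proof.
move=> r0 thr th1.
have r1 : 0 < 1 + r%:R :> R by rewrite ltr_wpDr // ler0n.
have th0 : 0 < theta by apply: lt_trans thr; rewrite divr_gt0.
have thr' : 1 < theta * (1 + r%:R) by rewrite -ltr_pdivrMr.
have h0 : hf theta r 0 = 1 - theta.
  rewrite /hf big_ord_recl expr0 big1 ?addr0 ?mulr1 // => i _.
  by rewrite expr0n.
have h1 : hf theta r 1 = 1 - theta * (1 + r%:R).
  rewrite /hf (eq_bigr (fun _ => 1)); last by move=> i _; rewrite expr1n.
  by rewrite sumr_const card_ord mulrS.
have [c c01 hc] : exists2 c, c \in `[0, 1] & hf theta r c = 0.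
  have hc : {within `[0, 1], continuous (hf theta r)}%classic.
    by apply: continuous_subspaceT; exact: hf_cont.
  apply: (IVT ler01 hc).
  rewrite h0 h1; apply/andP; split.
    by rewrite ge_min; apply/orP; right; lra.
  by rewrite le_max; apply/orP; left; lra.
move: c01; rewrite in_itv /= => /andP[c0 c1].
have c1' : c < 1.
  rewrite lt_neqAle c1 andbT; apply/negP => /eqP ec.
  by move: hc; rewrite ec h1 => /eqP; rewrite subr_eq0 => /eqP e; lra.
have gc : c = (1 - theta) + theta * c ^+ r.+1.
  by apply/eqP; rewrite eq_sym -subr_eq0 g_hf hc mulr0.
exists c; split => // rho' rho0 rho1 e.
have hr := hf_root rho1 e.
case: (ltgtP rho' c) => // H.
  by have := hf_decr th0 r0 rho0 H; rewrite hc hr ltxx.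
by have := hf_decr th0 r0 c0 H; rewrite hc hr ltxx.
Qed.

Definition q {R : realType} (th : R) (x : int) : R := if x == 1 then 1 - th else th.
Fixpoint paths (r : nat) (n : nat) : seq (seq int) :=
  match n with
  | 0 => [:: [::]]
  | n'.+1 => [seq 1 :: s | s <- paths r n'] ++ [seq (- r%:Z) :: s | s <- paths r n']
  end.
Fixpoint reachb (u : int) (s : seq int) : bool :=
  (u <= 0) || (if s is x :: s' then reachb (u - x) s' else false).
Definition wt {R : realType} (th : R) (s : seq int) : R := \prod_(x <- s) q th x.
Definition Phi {R : realType} (th : R) r n u : R :=
  \sum_(s <- paths r n | reachb u s) wt th s.

Lemma qN {R : realType} (th : R) (r : nat) : q th (- r%:Z) = th.
Proof. by rewrite /q; case: ifP => // /eqP; case: r. Qed.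

Lemma wt_cons {R : realType} (th : R) x s : wt th (x :: s) = q th x * wt th s.
Proof. by rewrite /wt big_cons. Qed.

Lemma sum_wt {R : realType} (th : R) r n : \sum_(s <- paths r n) wt th s = 1.
Proof.
elim: n => [|n IH]; first by rewrite big_cons big_nil addr0 /wt big_nil.
rewrite /= big_cat !big_map.
rewrite !(eq_bigr _ (fun s _ => wt_cons th _ s)) /=.
by rewrite -!mulr_sumr IH qN /q eqxx !mulr1 subrK.
Qed.

Lemma Phi_le0 {R : realType} (th : R) r n u : u <= 0 -> Phi th r n u = 1.
Proof.
move=> u0; rewrite /Phi -(sum_wt th r n); apply: eq_bigl => s.
by case: s => [|x s] /=; rewrite u0.
Qed.

Lemma Phi0 {R : realType} (th : R) r u : 0 < u -> Phi th r 0 u = 0.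
Proof. by move=> u0; rewrite /Phi big_cons /= leNgt u0 big_nil. Qed.

Lemma PhiS {R : realType} (th : R) r n u : 0 < u ->
  Phi th r n.+1 u = (1 - th) * Phi th r n (u - 1) + th * Phi th r n (u + r%:Z).
Proof.
move=> u0; rewrite /Phi /= big_cat !big_map /= !leNgt u0 /= opprK.
rewrite !(eq_bigr _ (fun s _ => wt_cons th _ s)) /=.
by rewrite -!mulr_sumr qN /q eqxx.
Qed.

Lemma Phi_bounds {R : realType} (th rho s lam : R) r :
  0 <= th -> th <= 1 -> 0 <= lam -> 0 <= rho -> rho <= s ->
  rho = (1 - th) + th * rho ^+ r.+1 ->
  (1 - th) + th * s ^+ r.+1 = lam * s ->
  forall n k, rho ^+ k - lam ^+ n * s ^+ k <= Phi th r n k%:Z <= rho ^+ k.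
Proof.
move=> th0 th1 lam0 rho0 rhos grho gs n; elim: n => [|n IH] [|k].
- by rewrite Phi_le0 // !expr0 mulr1 subrr lexx ler01.
- rewrite Phi0 // expr0 mul1r subr_le0 exprn_ge0 ?andbT //.
  by apply: lerXn2r => //; apply: le_trans rhos.
- rewrite Phi_le0 // !expr0 mulr1 lexx andbT lerBlDr lerDl.
  exact: exprn_ge0.
- rewrite PhiS //.
  have -> : (k.+1%:Z - 1) = k%:Z by rewrite -addn1 PoszD addrK.
  have -> : (k.+1%:Z + r%:Z) = (k.+1 + r)%N%:Z by rewrite PoszD.
  have /andP[l1 u1] := IH k; have /andP[l2 u2] := IH (k.+1 + r)%N.
  have e1 : rho ^+ k.+1 = (1 - th) * rho ^+ k + th * rho ^+ (k.+1 + r).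
    by rewrite exprS {1}grho mulrDl -mulrA -exprD addnC addSnnS.
  have e2 : lam ^+ n.+1 * s ^+ k.+1 =
     (1 - th) * (lam ^+ n * s ^+ k) + th * (lam ^+ n * s ^+ (k.+1 + r)).
    rewrite exprS [s ^+ k.+1]exprS.
    have -> : lam * lam ^+ n * (s * s ^+ k) = lam ^+ n * s ^+ k * (lam * s) by ring.
    rewrite -gs mulrDr; congr (_ + _); first by ring.
    rewrite addSnnS exprD; ring.
  have th1' : 0 <= 1 - th by rewrite subr_ge0.
  apply/andP; split.
    rewrite e1 e2.
    have := ler_wpM2l th1' l1; have := ler_wpM2l th0 l2. lra.
  rewrite e1; have := ler_wpM2l th1' u1; have := ler_wpM2l th0 u2. lra.
Qed.

Definition good {d} {T : measurableType d} {R : realType} (P : probability T R)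
  (D : nat -> T -> int) (r : nat) (th : R) : Prop :=
 [/\ (forall i v, measurable [set w | D i w = v]),
     (forall i, P [set w | D i w = 1] = (1 - th)%:E),
     (forall i, P [set w | D i w = - r%:Z] = th%:E) &
     (forall (I : seq nat) (v : nat -> int), uniq I ->
        (forall i, i \in I -> v i = 1 \/ v i = - r%:Z) ->
        P [set w | forall i, i \in I -> D i w = v i]
        = (\prod_(i <- I) P [set w | D i w = v i])%E)].

Definition vec {T} (D : nat -> T -> int) k n (w : T) : seq int :=
  [seq D i w | i <- iota k n].

Lemma vec_measurable d (T : measurableType d) (D : nat -> T -> int) :
  (forall i v, measurable [set w | D i w = v]) ->
  forall n k (Q : pred (seq int)), measurable [set w | Q (vec D k n w)].
Proof.
move=> mD; elim=> [|n IH] k Q.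
  rewrite /vec /=; case: (Q [::]).
    by rewrite (_ : [set _ | _] = setT) //; apply/seteqP; split.
  by rewrite (_ : [set _ | _] = set0) //; apply/seteqP; split.
pose f j : int := odflt 0 (unpickle j).
rewrite (_ : [set w | _] = \bigcup_j ([set w | D k w = f j] `&`
                                       [set w | Q (f j :: vec D k.+1 n w)])).
  apply: bigcupT_measurable => j; apply: measurableI; first exact: mD.
  exact: (IH k.+1 (fun s => Q (f j :: s))).
apply/seteqP; split => w /=.
  by move=> Hw; exists (pickle (D k w)) => //; rewrite /f pickleK /=; split.
by move=> [j _ [e H]]; rewrite /vec /= e.
Qed.

Lemma vec_eq_measurable d (T : measurableType d) (D : nat -> T -> int) :
  (forall i v, measurable [set w | D i w = v]) ->
  forall n k s, measurable [set w | vec D k n w = s].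
Proof.
move=> mD n k s.
rewrite (_ : [set w | _ = s] = [set w | vec D k n w == s]).
  exact: (@vec_measurable _ _ D mD n k (fun t => t == s)).
by apply/seteqP; split => w /= /eqP.
Qed.

Lemma prodEFin (R : realType) (I : Type) (l : seq I) (f : I -> R) :
  (\prod_(i <- l) (f i)%:E)%E = (\prod_(i <- l) f i)%:E.
Proof.
by elim: l => [|x l IH]; rewrite ?big_nil ?big_cons // IH EFinM.
Qed.

Lemma paths_mem {r n s} : s \in paths r n ->
  size s = n /\ (forall x, x \in s -> x = 1 \/ x = - r%:Z).
Proof.
elim: n s => [|n IH] s /=.
  by rewrite inE => /eqP ->.
rewrite mem_cat => /orP[] /mapP [t /IH [st xt] ->]; split; rewrite /= ?st // => x;
  rewrite inE => /orP[/eqP -> | /xt //]; by [left | right].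
Qed.

Lemma paths_uniq r n : uniq (paths r n).
Proof.
elim: n => [|n IH] //=.
rewrite cat_uniq !map_inj_uniq //; last 2 first.
- by move=> a b [].
- by move=> a b [].
rewrite IH andbT; apply/hasPn => s /mapP [t _ ->]; apply/negP => /mapP [t' _ [e _]].

have : (- r%:Z <= 0)%R by rewrite oppr_le0.
  by rewrite e.
Qed.

Lemma vec_eq {T} (D : nat -> T -> int) k n w s : size s = n ->
  (vec D k n w = s <->
   forall i, i \in iota k n -> D i w = nth 0 s (i - k)).
Proof.
move=> sz; split.
  move=> <- i; rewrite mem_iota => /andP[ki ikn].
  rewrite /vec (nth_map 0) ?size_iota ?nth_iota ?subnKC //.
    by rewrite ltn_subLR.
  by rewrite ltn_subLR.
move=> H; apply: (@eq_from_nth _ 0); first by rewrite size_map size_iota sz.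
move=> j; rewrite size_map size_iota => jn.
rewrite (nth_map 0) ?size_iota // nth_iota // H ?addKn //.
by rewrite mem_iota leq_addr ltn_add2l.
Qed.

Lemma cyl_prob d (T : measurableType d) (R : realType) (P : probability T R)
  (D : nat -> T -> int) r (th : R) : good P D r th ->
  forall n k s, s \in paths r n -> P [set w | vec D k n w = s] = (wt th s)%:E.
Proof.
move=> [mD P1 Pr prodI] n k s Hs; have [sz xs] := paths_mem Hs.
rewrite (_ : [set w | _ = s] =
   [set w | forall i, i \in iota k n -> D i w = nth 0 s (i - k)]); last first.
  by apply/seteqP; split => w /= H; apply/(vec_eq D k n w s sz).
rewrite prodI ?iota_uniq //; last first.
  move=> i; rewrite mem_iota => /andP[ki ikn]; apply: xs; apply: mem_nth.
  by rewrite sz ltn_subLR.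
rewrite (_ : (\prod_(i <- iota k n) _)%E =
   (\prod_(i <- iota k n) (q th (nth 0 s (i - k)))%:E)%E); last first.
  apply: eq_big_seq => i; rewrite mem_iota => /andP[ki ikn].
  have [->|->] : nth 0 s (i - k) = 1 \/ nth 0 s (i - k) = - r%:Z.
  - by apply: xs; apply: mem_nth; rewrite sz ltn_subLR.
  - by rewrite P1 /q eqxx.
  - by rewrite Pr qN.
rewrite prodEFin; congr (_%:E).
have -> : iota k n = map (addn k) (iota 0 n) by rewrite -iotaDl addn0.
rewrite big_map (eq_bigr (fun i => q th (nth 0 s i))); last by move=> i _; rewrite addKn.
by rewrite /wt [RHS](big_nth 0) sz /index_iota subn0.
Qed.

Lemma union_prob d (T : measurableType d) (R : realType) (P : probability T R)
  (D : nat -> T -> int) :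
  (forall i v, measurable [set w | D i w = v]) ->
  forall n k (S : seq (seq int)), uniq S ->
  P [set w | vec D k n w \in S] = (\sum_(s <- S) P [set w | vec D k n w = s])%E.
Proof.
move=> mD n k; elim=> [|x S IH] /=.
  rewrite big_nil (_ : [set w | _] = set0) ?measure0 //.
  by apply/seteqP; split => w //=; rewrite in_nil.
move=> /andP[xS uS]; rewrite big_cons -IH //.
rewrite (_ : [set w | _] = [set w | vec D k n w = x] `|` [set w | vec D k n w \in S]).
  rewrite measureU //; first exact: vec_eq_measurable.
    exact: (@vec_measurable _ _ D mD n k (fun t => t \in S)).
  apply/seteqP; split => w // [/= -> H].
  by rewrite H in xS.
apply/seteqP; split => w /=; rewrite inE.
  by case/orP => [/eqP ->|H]; [left|right].
by case => [->|->]; rewrite ?eqxx ?orbT.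
Qed.

Lemma law_vec d (T : measurableType d) (R : realType) (P : probability T R)
  (D : nat -> T -> int) r (th : R) : good P D r th ->
  forall n k (Q : pred (seq int)),
  P [set w | Q (vec D k n w)] = (\sum_(s <- paths r n | Q s) wt th s)%:E.
Proof.
move=> G n k Q; have [mD _ _ _] := G.
set A := [set w | Q (vec D k n w)].
set B := [set w | vec D k n w \in paths r n].
have mA : measurable A by exact: vec_measurable.
have mB : measurable B by exact: (@vec_measurable _ _ D mD n k (fun t => t \in paths r n)).
have PB : P B = 1%E.
  rewrite /B union_prob ?paths_uniq //.
  rewrite (eq_big_seq (fun s => (wt th s)%:E)); last first.
    by move=> s Hs; exact: (@cyl_prob _ _ _ _ _ _ _ G n k s Hs).
  by rewrite sumEFin sum_wt.
have PnB : P (~` B) = 0%E.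
  by rewrite probability_setC // PB subee.
have -> : A = (A `&` B) `|` (A `&` ~` B) by rewrite -setIUr setUv setIT.
have HU : P (A `&` B `|` A `&` ~` B) = (P (A `&` B) + P (A `&` ~` B))%E.
  apply: measureU.
  - exact: measurableI.
  - by apply: measurableI => //; exact: measurableC.
  - by apply/seteqP; split => w // [[_ b] [_ nb]].
have H0 : P (A `&` ~` B) = 0%E.
  apply/eqP; rewrite eq_le measure_ge0 andbT -PnB.
  by apply: le_measure; rewrite ?inE; [apply: measurableI => //; exact: measurableC|exact: measurableC|move=> w []].
rewrite HU H0 adde0.
rewrite (_ : A `&` B = [set w | vec D k n w \in seq.filter Q (paths r n)]); last first.
  by apply/seteqP; split => w /=; rewrite mem_filter; [move=> [a b]; apply/andP; split|move=> /andP[a b]; split].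
rewrite union_prob ?filter_uniq ?paths_uniq //.
rewrite (eq_big_seq (fun s => (wt th s)%:E)); last first.
  by move=> s; rewrite mem_filter => /andP[_ Hs]; exact: (@cyl_prob _ _ _ _ _ _ _ G n k s Hs).
by rewrite big_filter sumEFin.
Qed.

Lemma sum_shift {T} (D : nat -> T -> int) k t w :
  \sum_(i < t.+1) D (k + i)%N w = D k w + \sum_(i < t) D (k.+1 + i)%N w.
Proof.
rewrite big_ord_recl /= addn0; congr (_ + _).
by apply: eq_bigr => i _; rewrite /bump /= add1n addnS addSn.
Qed.

Lemma reachb_vec {T} (D : nat -> T -> int) n : forall k u w,
  reachb u (vec D k n w) <-> exists t, (t <= n)%N /\ u <= \sum_(i < t) D (k + i)%N w.
Proof.
elim: n => [|n IH] k u w.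
  rewrite /vec /= orbF; split.
    by move=> u0; exists 0%N; rewrite big_ord0.
  by move=> [[|t] [//= _]]; rewrite big_ord0.
rewrite /vec /= -/(vec D k.+1 n w); split.
  case/orP => [u0|/IH [t [tn H]]].
    by exists 0%N; rewrite big_ord0.
  exists t.+1; split => //; rewrite sum_shift; lra.
move=> [[|t] [tn H]].
  by move: H; rewrite big_ord0 => ->.
apply/orP; right; apply/IH; exists t; split => //.
move: H; rewrite sum_shift; lra.
Qed.

Lemma walk_reach_eq {T} (D : nat -> T -> int) u :
  walk_reach D u = \bigcup_n [set w | reachb u (vec D 0 n w)].
Proof.
apply/seteqP; split => w /=.
  move=> [t Ht]; exists t => //=; apply/reachb_vec; exists t; split => //.
by move=> [n _ /reachb_vec [t [_ H]]]; exists t.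
Qed.

Lemma walk_cvg d (T : measurableType d) (R : realType) (P : probability T R)
  (D : nat -> T -> int) r (th : R) : good P D r th ->
  forall u, (fun n => (Phi th r n u)%:E) @ \oo --> P (walk_reach D u).
Proof.
move=> G u; have [mD _ _ _] := G.
pose F n := [set w | reachb u (vec D 0 n w)].
have mF : forall n, measurable (F n).
  by move=> n; exact: (@vec_measurable _ _ D mD n 0 (reachb u)).
have E : (fun n => (Phi th r n u)%:E) = P \o F.
  by apply/funext => n /=; rewrite /F (@law_vec _ _ _ _ _ _ _ G).
rewrite E walk_reach_eq; apply: nondecreasing_cvg_mu => //.
  exact: bigcupT_measurable.
move=> n m nm; apply/subsetPset => w /reachb_vec [t [tn H]].
by apply/reachb_vec; exists t; split => //; apply: leq_trans nm.
Qed.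

Lemma walk_good d (T : measurableType d) (R : realType) (P : probability T R)
  (D : nat -> T -> int) r (th : R) : walk_law P D 1 r th -> good P D r th.
Proof.
move=> [[mD idD prD] P1 Pr]; split => //.
- by move=> i; rewrite idD.
- by move=> i; rewrite idD.
- by move=> I v uI _; exact: prD.
Qed.

Lemma Phi_cvg (R : realType) (r : nat) (theta rho : R) :
  (0 < r)%N -> 1 / (1 + r%:R) < theta -> theta < 1 ->
  0 <= rho -> rho < 1 -> rho = (1 - theta) + theta * rho ^+ r.+1 ->
  forall k : nat, (fun n => (Phi theta r n k%:Z)%:E) @ \oo --> (rho ^+ k)%:E.
Proof.
move=> r0 thr th1 rho0 rho1 grho k.
have r1 : 0 < 1 + r%:R :> R by rewrite ltr_wpDr // ler0n.
have th0 : 0 < theta by apply: lt_trans thr; rewrite divr_gt0.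
pose s := (rho + 1) / 2.
have s0 : 0 < s by rewrite /s; lra.
have rs : rho < s by rewrite /s; lra.
have s1 : s < 1 by rewrite /s; lra.
have hs : hf theta r s < 0.
  by rewrite -(hf_root rho1 grho); exact: hf_decr.
pose lam := ((1 - theta) + theta * s ^+ r.+1) / s.
have gs : (1 - theta) + theta * s ^+ r.+1 = lam * s by rewrite /lam divfK // gt_eqF.
have lam0 : 0 <= lam.
  rewrite /lam divr_ge0 ?(ltW s0) // addr_ge0 ?mulr_ge0 ?exprn_ge0 ?(ltW th0) ?(ltW s0) //.
  by rewrite subr_ge0 ltW.
have lam1 : lam < 1.
  rewrite /lam ltr_pdivrMr // mul1r.
  have := g_hf theta r s; have : 0 < 1 - s by lra.
  move=> H1 H2; have : (1 - s) * hf theta r s < 0 by rewrite pmulr_rlt0.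
  lra.
have B := @Phi_bounds R theta rho s lam r (ltW th0) (ltW th1) lam0 rho0 (ltW rs) grho gs.
apply: cvg_EFin; first by apply: nearW.
apply: (@squeeze_cvgr _ _ _ _ (fun n => rho ^+ k - lam ^+ n * s ^+ k) (fun _ => rho ^+ k)).
- by apply: nearW => n /=; exact: B.
- rewrite -[X in _ --> X]subr0; apply: cvgB; first exact: cvg_cst.
  rewrite -(mul0r (s ^+ k)); apply: cvgMl; apply: cvg_expr.
  by rewrite ger0_norm.
- exact: cvg_cst.
Qed.

Lemma trust_okE (R : realType) a b r s f : (0 < a)%N ->
  trust_ok (R := R) a b 1 r s f = (b + f <= r * (a + s))%N.
Proof.
move=> a0; rewrite /trust_ok /theta_hat_of.
set Dn : R := a%:R + b%:R + s%:R + f%:R.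
have D0 : 0 < Dn by rewrite /Dn !ltr_wpDr ?ler0n // ltr0n.
have -> : r%:R * ((a%:R + s%:R) / Dn) - 1%:R * (1 - (a%:R + s%:R) / Dn)
   = ((r * (a + s))%N%:R - (b + f)%N%:R) / Dn.
  rewrite !natrM !natrD /Dn; field; exact: lt0r_neq0.
by rewrite ler_pdivlMr // mul0r subr_ge0 ler_nat.
Qed.

Definition stepX {T} (r : nat) (X : nat -> T -> bool) (i : nat) (w : T) : int :=
  if X i.+1 w then - r%:Z else 1.

Definition val (r : nat) (st : nat * nat * bool) : int :=
  st.1.2%:Z - r%:Z * st.1.1%:Z.

Lemma ok_step (R : realType) a b r {T} (X : nat -> T -> bool) t w :
  (trust_state (R := R) a b 1 r X t.+1 w).2 =
  (trust_state (R := R) a b 1 r X t w).2 &&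
  trust_ok (R := R) a b 1 r (trust_state (R := R) a b 1 r X t.+1 w).1.1
                            (trust_state (R := R) a b 1 r X t.+1 w).1.2.
Proof.
rewrite /=; case: (trust_state a b 1 r X t w) => [[s0 f0] [|]] //=.
Qed.

Lemma inv (R : realType) a b r {T} (X : nat -> T -> bool) w : forall t,
  let st := trust_state (R := R) a b 1 r X t w in
  (st.2 -> val r st = walkZ (stepX r X) t w) /\
  (exists2 t', (t' <= t)%N & val r st = walkZ (stepX r X) t' w).
Proof.
elim=> [|t [IH1 IH2]] /=.
  by split; [move=> _|exists 0%N => //]; rewrite /val /walkZ big_ord0 /= mulr0 subr0.
move: IH1 IH2; case: (trust_state a b 1 r X t w) => [[s0 f0] ok] /= IH1 IH2.
case: ok IH1 IH2 => IH1 IH2 /=.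
  have e : val r (s0 + X t.+1 w, f0 + ~~ X t.+1 w, true) = walkZ (stepX r X) t.+1 w.
    rewrite /walkZ big_ord_recr /= -/(walkZ _ t w) -IH1 // /val /stepX /=.
    case: (X t.+1 w) => /=; rewrite ?addn0 ?addn1 !PoszD; ring.
  split; first by move=> _; exact: e.
  by exists t.+1.
split => //; case: IH2 => t' tt' e; exists t' => //; exact: leqW.
Qed.

Lemma quit_eq (R : realType) a b r {T} (X : nat -> T -> bool) : (0 < a)%N ->
  quit_event (R := R) a b 1 r X
  = walk_reach (stepX r X) (r%:Z * a%:Z - b%:Z + 1).
Proof.
move=> a0.
have key : forall s f : nat, (r%:R * theta_hat_of (R := R) a b s f
     - 1%:R * (1 - theta_hat_of (R := R) a b s f) < 0)
   <-> (r%:Z * a%:Z - b%:Z + 1 <= f%:Z - r%:Z * s%:Z).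
  move=> s f; rewrite ltNge.
  have -> : (0 <= r%:R * theta_hat_of (R := R) a b s f
     - 1%:R * (1 - theta_hat_of (R := R) a b s f)) = trust_ok (R := R) a b 1 r s f by [].
  rewrite trust_okE // -ltnNge; split => H; lia.
apply/seteqP; split => w /=.
  move=> [t]; rewrite /theta_hat /S_hat /F_hat key => H.
  have [_ [t' _ e]] := inv R a b r X w t.
  by exists t'; rewrite -e.
move=> [t Ht]; apply: contrapT => nq.
have allok : forall t, trust_ok (R := R) a b 1 r
    (trust_state (R := R) a b 1 r X t w).1.1 (trust_state (R := R) a b 1 r X t w).1.2.
  move=> t0; apply/negPn/negP => H; apply: nq; exists t0.
  rewrite /theta_hat /S_hat /F_hat; apply/key.
  move: H; rewrite trust_okE // -ltnNge => H; lia.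
have okt : forall t, (trust_state (R := R) a b 1 r X t w).2.
  elim=> [|t0 IH]; first exact: (allok 0%N).
  by rewrite ok_step IH allok.
have [e _] := inv R a b r X w t.
move: (allok t); rewrite trust_okE // => H.
move: Ht; rewrite -(e (okt t)) /val; lia.
Qed.

Lemma Nr1 (r : nat) : (- r%:Z == 1) = false.
Proof. by case: r. Qed.

Lemma stepX_set {T} r (X : nat -> T -> bool) i v :
  [set w | stepX r X i w = v] =
  if v == 1 then [set w | X i.+1 w = false]
  else if v == - r%:Z then [set w | X i.+1 w = true] else set0.
Proof.
apply/seteqP; split => w /=; rewrite /stepX.
  by case E: (X i.+1 w) => <-; rewrite ?eqxx ?Nr1 /=.
case: ifP => [/eqP ->|_]; first by move=> ->.
by case: ifP => [/eqP ->|_] // ->.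
Qed.

Lemma stepX_iff {T} r (X : nat -> T -> bool) i w v : v = 1 \/ v = - r%:Z ->
  (stepX r X i w = v <-> X i.+1 w = (v == - r%:Z)).
Proof.
rewrite /stepX => - [->|->]; rewrite ?eqxx ?(eq_sym 1) ?Nr1; case: (X i.+1 w) => //.
  by split => // /eqP; rewrite Nr1.
by split => // /eqP; rewrite eq_sym Nr1.
Qed.

Lemma bern_good d (T : measurableType d) (R : realType) (P : probability T R)
  (X : nat -> T -> bool) r (th : R) : bernoulli_law P X th -> good P (stepX r X) r th.
Proof.
move=> [[mX idX prX] P1].
have PF : forall i, P [set w | X i w = false] = (1 - th)%:E.
  move=> i; rewrite idX (_ : [set w | X 0%N w = false] = ~` [set w | X 0%N w = true]).
    by rewrite probability_setC // P1.
  by apply/seteqP; split => w /=; case: (X 0%N w).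
have PT : forall i, P [set w | X i w = true] = th%:E by move=> i; rewrite idX.
split.
- move=> i v; rewrite stepX_set; case: ifP => _ //; case: ifP => _ //.
- by move=> i; rewrite stepX_set eqxx.
- by move=> i; rewrite stepX_set Nr1 eqxx.
move=> I v uI Hv.
pose bv j := v j.-1 == - r%:Z.
rewrite (_ : [set w | _] = [set w | forall j, j \in map succn I -> X j w = bv j]).
  rewrite prX ?map_inj_uniq //; last by move=> x y [].
  rewrite big_map; apply: eq_big_seq => i iI.
  congr (P _); apply/seteqP; split => w /= H.
    exact: (proj2 (stepX_iff r X i w (v i) (Hv i iI)) H).
  exact: (proj1 (stepX_iff r X i w (v i) (Hv i iI)) H).
apply/seteqP; split => w /= H.
  move=> j /mapP [i iI ->]; exact: (proj1 (stepX_iff r X i w (v i) (Hv i iI)) (H i iI)).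
move=> i iI; apply: (proj2 (stepX_iff r X i w (v i) (Hv i iI))); apply: H; exact: map_f.
Qed.

Theorem lemma3p3 (R : realType) (r : nat) (theta : R) :
  (0 < r)%N -> 1 / (1 + r%:R) < theta -> theta < 1 ->
  (exists rho : R, [/\ 0 <= rho, rho < 1,
      rho = (1 - theta) + theta * rho ^+ r.+1 &
      forall rho' : R, 0 <= rho' -> rho' < 1 ->
        rho' = (1 - theta) + theta * rho' ^+ r.+1 -> rho' = rho]) /\
  (forall rho : R, 0 <= rho -> rho < 1 ->
     rho = (1 - theta) + theta * rho ^+ r.+1 ->
     forall (d : measure_display) (T : measurableType d) (P : probability T R)
            (Delta : nat -> T -> int),
       walk_law P Delta 1 r theta ->
       forall u : nat, P (walk_reach Delta u%:Z) = (rho ^+ u)%:E) /\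
  (forall alpha beta : nat, (0 < alpha)%N -> (0 < beta)%N ->
     forall (d : measure_display) (T : measurableType d) (P : probability T R)
            (X : nat -> T -> bool),
       bernoulli_law P X theta ->
     forall (d' : measure_display) (T' : measurableType d') (P' : probability T' R)
            (Delta : nat -> T' -> int),
       walk_law P' Delta 1 r theta ->
       P (quit_event (R := R) alpha beta 1 r X)
       = P' (walk_reach Delta (r%:Z * alpha%:Z - beta%:Z + 1))).
Proof.
move=> r0 thr th1; split; first exact: part1.
split.
  move=> rho rho0 rho1 grho d T P D WL u.
  have H1 := @walk_cvg _ _ _ _ _ _ _ (@walk_good _ _ _ _ _ _ _ WL) u%:Z.
  have H2 := @Phi_cvg R r theta rho r0 thr th1 rho0 rho1 grho u.
  exact: (cvg_unique _ H1 H2).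
move=> a b a0 b0 d T P X BL d' T' P' D WL.
rewrite quit_eq //.
have H1 := @walk_cvg _ _ _ _ _ _ _ (@bern_good _ _ _ _ _ r _ BL) (r%:Z * a%:Z - b%:Z + 1).
have H2 := @walk_cvg _ _ _ _ _ _ _ (@walk_good _ _ _ _ _ _ _ WL) (r%:Z * a%:Z - b%:Z + 1).
exact: (cvg_unique _ H1 H2).
Qed.
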